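(* Let $\mathcal{D}=(X,\mathcal{B})$ be a $(v,k,\lambda)$ symmetric design of order $q=k-\lambda\geq 2$ and let $\Gamma_\mathcal{D}$ be its incidence graph. Then there exists a split resolving set for $\Gamma_\mathcal{D}$ of size $2\cdot\left\lceil\frac{v\log v}{k-\lambda}\right\rceil$.
   Context: A symmetric design with parameters $(v,k,\lambda)$ is a pair $(X,\mathcal{B})$ where $X$ is a set of $v$ points and $\mathcal{B}$ is a family of $k$-subsets of $X$ (blocks) such that any two distinct points lie in exactly $\lambda$ blocks and any two distinct blocks meet in exactly $\lambda$ points. Its order is $q=k-\lambda$. The incidence graph $\Gamma_\mathcal{D}$ is the bipartite graph on $X\cup\mathcal{B}$ with $x$ adjacent to $B$ iff $x\in B$. For a bipartite graph with bipartition $X\cup Y$, a split resolving set is a set $S=S_X\cup S_Y$ with $S_X\subseteq X$, $S_Y\subseteq Y$, such that any two distinct vertices of $X$ are at different distances from some vertex of $S_Y$, and any two distinct vertices of $Y$ are at different distances from some vertex of $S_X$. $\log$ is the natural logarithm. *)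

(* Defs.v *)
From HB Require Import structures.
From mathcomp Require Import all_boot all_order all_algebra.
From mathcomp Require Import all_classical all_reals all_analysis.
Set Implicit Arguments. Unset Strict Implicit. Unset Printing Implicit Defensive.
Import Order.TTheory GRing.Theory Num.Theory.

Definition symmetric_design (X : finType) (B : {set {set X}}) (v k lam : nat) : Prop :=
  [/\ #|X| = v, #|B| = v,
      (forall Y, Y \in B -> #|Y| = k),
      (forall x1 x2 : X, x1 != x2 ->
          #|[set Y in B | (x1 \in Y) && (x2 \in Y)]| = lam)
    & (forall Y1 Y2, Y1 \in B -> Y2 \in B -> Y1 != Y2 -> #|Y1 :&: Y2| = lam)].

(* Sets that are not blocks are isolated
   vertices, so they do not affect distances among points and blocks. *)
Definition inc_vertex (X : finType) : finType := (X + {set X})%type.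

Definition inc_adj (X : finType) (B : {set {set X}}) : rel (inc_vertex X) :=
  fun u w =>
    match u, w with
    | inl x, inr Y => (Y \in B) && (x \in Y)
    | inr Y, inl x => (Y \in B) && (x \in Y)
    | _, _ => false
    end.

Definition walk_n (X : finType) (B : {set {set X}}) (n : nat) (u w : inc_vertex X) : bool :=
  [exists p : n.-tuple (inc_vertex X), path (inc_adj B) u p && (last u p == w)].

(* graph distance; equals #|V| (acting as "infinity") if w is unreachable
   from u, since any finite distance is < #|V|. *)
Definition inc_dist (X : finType) (B : {set {set X}}) (u w : inc_vertex X) : nat :=
  find (fun n => walk_n B n u w) (iota 0 #|inc_vertex X|).

Definition split_resolving (X : finType) (B : {set {set X}})
    (SX : {set X}) (SY : {set {set X}}) : Prop :=
  [/\ SY \subset B,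
      (forall x1 x2 : X, x1 != x2 -> exists2 Y, Y \in SY &
          inc_dist B (inl x1) (inr Y) != inc_dist B (inl x2) (inr Y))
    & (forall Y1 Y2, Y1 \in B -> Y2 \in B -> Y1 != Y2 -> exists2 x, x \in SX &
          inc_dist B (inr Y1) (inl x) != inc_dist B (inr Y2) (inl x))].

(* Main.v *)
Require Import Defs.
From HB Require Import structures.
From mathcomp Require Import all_boot all_order all_algebra.
From mathcomp Require Import zify.
Import Order.TTheory GRing.Theory Num.Theory.


Lemma card_bigcup_le (T : finType) (I : Type) (r : seq I) (P : pred I) (A : I -> {set T}) :
  (#|\bigcup_(i <- r | P i) A i| <= \sum_(i <- r | P i) #|A i|)%N.
Proof.
apply: (big_ind2 (fun (S : {set T}) n => #|S| <= n)%N) => //.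
- by rewrite cards0.
- move=> S1 n1 S2 n2 h1 h2; rewrite cardsU.
  apply: leq_trans (leq_subr _ _) _; exact: leq_add.
Qed.

Lemma card_ffun_set (T : finType) (c : nat) (A : {set T}) :
  #|[set f : {ffun 'I_c -> T} | [forall i, f i \in A]]| = (#|A| ^ c)%N.
Proof.
rewrite -[in RHS](card_ord c) -card_ffun_on; apply: eq_card => f.
rewrite inE; apply/forallP/ffun_onP => h x; exact: h.
Qed.

Lemma expn_mono (a b c : nat) : (a <= b)%N -> (a ^ c <= b ^ c)%N.
Proof. move=> h; elim: c => [//|c IH]; rewrite !expnS; exact: leq_mul. Qed.

Lemma hit (T K : finType) (U : {set T}) (P : {set K}) (D : K -> {set T}) (m c : nat) :
  (forall p, p \in P -> m <= #|D p| /\ D p \subset U)%N ->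
  (0 < #|U|)%N -> (#|P| < #|U| * #|U|)%N ->
  (#|U| * #|U| * (#|U| - m) ^ c <= #|U| ^ c)%N ->
  exists S : {set T}, [/\ S \subset U, (#|S| <= c)%N &
     forall p, p \in P -> exists2 x, x \in S & x \in D p].
Proof.
move=> hD hU hP hc.
pose good := [set f : {ffun 'I_c -> T} | [forall i, f i \in U]].
pose bad p := [set f : {ffun 'I_c -> T} | [forall i, f i \in U :\: D p]].
have hbad : forall p, p \in P -> (#|bad p| <= (#|U| - m) ^ c)%N.
  move=> p pP; rewrite card_ffun_set; apply: expn_mono.
  have [h1 h2] := hD p pP.
  rewrite cardsD (setIidPr h2); exact: leq_sub2l.
case: (boolP [exists f, (f \in good) && [forall p in P, f \notin bad p]]).
  case/existsP => f /andP [fg /forall_inP fb].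
  exists [set f i | i : 'I_c]; split.
  - apply/subsetP => x /imsetP [i _ ->]; move: fg; rewrite inE => /forallP; exact.
  - by apply: leq_trans (leq_imset_card _ _) _; rewrite card_ord.
  - move=> p pP; have := fb p pP; rewrite inE negb_forall => /existsP [i hi].
    exists (f i); first by apply/imsetP; exists i.
    move: fg; rewrite inE => /forallP /(_ i) fiU.
    by move: hi; rewrite !inE fiU andbT negbK.
rewrite negb_exists => /forallP hall.
have sub : good \subset \bigcup_(p in P) bad p.
  apply/subsetP => f fg; have := hall f; rewrite fg /= negb_forall => /existsP [p].
  rewrite negb_imply negbK => /andP [pP fb]; apply/bigcupP; by exists p.
have := subset_leq_card sub.
rewrite card_ffun_set => h1.
have h2 := leq_trans h1 (card_bigcup_le _ _ _ _ _).
have h3 : (\sum_(p in P) #|bad p| <= #|P| * (#|U| - m) ^ c)%N.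
  rewrite -sum_nat_const; apply: leq_sum => p pP; exact: hbad.
have h4 := leq_trans h2 h3.
set X := ((#|U| - m) ^ c)%N in hc h3 h4.
have hUc : (0 < #|U| ^ c)%N by rewrite expn_gt0 hU.
case: (posnP X) => hX.
  by move: h4; rewrite hX muln0 leqn0 => /eqP e; rewrite e in hUc.
have : (#|P| * X < #|U| * #|U| * X)%N by rewrite ltn_pmul2r.
move=> h5; have := leq_trans h4 (leq_trans (ltnW h5) hc).
move=> _; have := leq_ltn_trans h4 h5; rewrite ltnNge; by rewrite hc.
Qed.

Lemma pad (T : finType) (U S : {set T}) (c : nat) :
  S \subset U -> (#|S| <= c)%N -> (c <= #|U|)%N ->
  exists S' : {set T}, [/\ S \subset S', S' \subset U & #|S'| = c].
Proof.
move=> hSU hSc hcU.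
have [n hn] : exists n, n = (c - #|S|)%N by exists (c - #|S|)%N.
elim: n S hSU hSc hn => [|n IH] S hSU hSc hn.
  exists S; split => //; apply/eqP; rewrite eqn_leq hSc /=; lia.
have hlt : (#|S| < #|U|)%N by lia.
have /properP [_ [x xU xS]] : S \proper U by rewrite properEcard hSU hlt.
have s1 : x |: S \subset U by rewrite subUset sub1set xU.
have s2 : (#|x |: S| <= c)%N by rewrite cardsU1 xS; lia.
have s3 : n = (c - #|x |: S|)%N by rewrite cardsU1 xS; lia.
have [S' [h1 h2 h3]] := IH (x |: S) s1 s2 s3.
exists S'; split => //; apply: subset_trans h1; exact: subsetUr.
Qed.

Lemma walk0 (X : finType) (B : {set {set X}}) (u w : inc_vertex X) :
  walk_n B 0 u w = (u == w).
Proof.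
apply/existsP/eqP => [[p /andP [_ /eqP]]|->].
  by rewrite (tuple0 p).
by exists [tuple]; rewrite /= eqxx.
Qed.

Lemma walk1 (X : finType) (B : {set {set X}}) (u w : inc_vertex X) :
  walk_n B 1 u w = inc_adj B u w.
Proof.
apply/existsP/idP => [[p]|h].
  case: p => [[|z [|? ?]] //= _]; by rewrite andbT => /andP [h /eqP <-].
by exists [tuple w]; rewrite /= h eqxx.
Qed.

Lemma dist1 (X : finType) (B : {set {set X}}) (x : X) (Y : {set X}) :
  (0 < #|X|)%N ->
  (inc_dist B (inl x) (inr Y) == 1%N) = (Y \in B) && (x \in Y) /\
  (inc_dist B (inr Y) (inl x) == 1%N) = (Y \in B) && (x \in Y).
Proof.
move=> hX.
have hN : (2 <= #|inc_vertex X|)%N.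
  rewrite /inc_vertex card_sum.
  have : (0 < #|{set X}|)%N by apply/card_gt0P; exists set0.
  move=> h; exact: (leq_add hX h).
rewrite /inc_dist.
have -> : iota 0 #|inc_vertex X| = [:: 0, 1 & iota 2 (#|inc_vertex X| - 2)]%N.
  by case: #|inc_vertex X| hN => [|[|n]] //= _; rewrite subn2.
rewrite /= !walk0 !walk1 /=.
by split; case: ((Y \in B) && (x \in Y)).
Qed.

Lemma card_symdiff (T : finType) (A1 A2 : {set T}) (k l : nat) :
  #|A1| = k -> #|A2| = k -> #|A1 :&: A2| = l ->
  #|(A1 :\: A2) :|: (A2 :\: A1)| = (2 * (k - l))%N.
Proof.
move=> h1 h2 h3.
rewrite cardsU.
have -> : (A1 :\: A2) :&: (A2 :\: A1) = set0.
  apply/setP => x; rewrite !inE; by case: (x \in A1); case: (x \in A2).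
rewrite cards0 subn0 !cardsD h1 h2 h3 setIC h3; lia.
Qed.

Lemma card_ind (T : finType) (A : {set T}) : (\sum_y (y \in A : nat))%N = #|A|.
Proof.
rewrite -sum1_card [RHS]big_mkcond; apply: eq_bigr => y _; by case: (y \in A).
Qed.

Lemma card_in_sum (T : finType) (A : {set T}) (P : pred T) :
  #|[set y in A | P y]| = (\sum_(y in A) (P y : nat))%N.
Proof.
rewrite -sum1_card big_mkcond [RHS]big_mkcond; apply: eq_bigr => y _.
rewrite !inE; by case: (y \in A); case: (P y).
Qed.

Lemma rep_eq (X : finType) (B : {set {set X}}) v k lam (x : X) :
  symmetric_design B v k lam ->
  (#|[set Y in B | x \in Y]| * (k - 1) = lam * (v - 1))%N.
Proof.
case=> hv hb hk hl hi.
pose S := (\sum_(x2 | x2 != x) \sum_(Y in B) ((x \in Y) && (x2 \in Y) : nat))%N.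
have e1 : S = (lam * (v - 1))%N.
  rewrite /S (eq_bigr (fun _ => lam)); last first.
    move=> x2 hx2; rewrite -card_in_sum; apply: hl; by rewrite eq_sym.
  rewrite sum_nat_const cardC1 hv; lia.
have e2 : S = (\sum_(Y in B) ((x \in Y) * (k - 1)))%N.
  rewrite /S exchange_big /=; apply: eq_bigr => Y YB.
  case xY: (x \in Y) => /=.
  - rewrite mul1n -(hk Y YB) (cardsD1 x Y) xY add1n subn1 /= -card_ind.
    rewrite big_mkcond /=; apply: eq_bigr => x2 _; rewrite !inE; by case: (x2 == x).
  - by rewrite mul0n big1.
rewrite card_in_sum big_distrl /= -e2 e1 //.
Qed.

Lemma rep_k (X : finType) (B : {set {set X}}) v k lam (x : X) :
  symmetric_design B v k lam -> (2 <= k)%N -> (0 < v)%N ->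
  #|[set Y in B | x \in Y]| = k.
Proof.
move=> D hk hv.
have eqr : forall y, #|[set Y in B | y \in Y]| = #|[set Y in B | x \in Y]|.
  move=> y; apply/eqP; rewrite -(@eqn_pmul2r (k - 1)); last lia.
  by rewrite (@rep_eq X B v k lam y D) (@rep_eq X B v k lam x D).
case: D => hv' hb hkk hl hi.
have e : (\sum_(y : X) #|[set Y in B | y \in Y]| = v * k)%N.
  rewrite (eq_bigr (fun y => \sum_(Y in B) (y \in Y : nat))%N); last by move=> y _; rewrite card_in_sum.
  rewrite exchange_big /= (eq_bigr (fun _ => k)); last by move=> Y YB; rewrite card_ind hkk.
  by rewrite sum_nat_const hb.
move: e; rewrite (eq_bigr (fun _ => #|[set Y in B | x \in Y]|)); last by move=> y _; rewrite eqr.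
rewrite sum_nat_const cardT -cardE hv'.
by move/eqP; rewrite eqn_pmul2l // => /eqP.
Qed.

Lemma kk_eq (X : finType) (B : {set {set X}}) v k lam :
  symmetric_design B v k lam -> (2 <= k)%N -> (0 < v)%N ->
  (k * (k - 1) = lam * (v - 1))%N.
Proof.
move=> D hk hv.
have hX : (0 < #|X|)%N by case: D => -> *.
have /card_gt0P [x _] := hX.
by rewrite -(@rep_eq X B v k lam x D) (@rep_k X B v k lam x D).
Qed.

Lemma arith (v k lam : nat) : (k * (k - 1) = lam * (v - 1))%N -> (lam + 2 <= k)%N ->
  (2 * k <= v + lam)%N -> (2 <= v)%N ->
  (v <= (k - lam) * (k - lam) + (k - lam) + 1)%N.
Proof.
move=> e hk hkv hv.
have [p hp] : exists p, k = (lam + p + 2)%N by exists (k - lam - 2)%N; lia.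
have [mu hmu] : exists mu, v = (2 * p + 4 + lam + mu)%N by exists (v - 2 * p - 4 - lam)%N; lia.
subst k v.
have -> : (lam + p + 2 - lam = p + 2)%N by lia.
rewrite (_ : lam + p + 2 - 1 = lam + p + 1)%N in e; last by lia.
rewrite (_ : 2 * p + 4 + lam + mu - 1 = lam + mu + 2 * p + 3)%N in e; last by lia.
have e2 : (lam * mu = (p + 2) * (p + 1))%N.
  move: e; rewrite !mulnDr !mulnDl; lia.
have mu1 : (1 <= mu)%N.
  case: (posnP mu) => // h0; rewrite h0 muln0 in e2; lia.
have lam1 : (1 <= lam)%N.
  case: (posnP lam) => // h0; rewrite h0 mul0n in e2; lia.
have [a ha] : exists a, lam = a.+1 by exists lam.-1; lia.
have [b hb] : exists b, mu = b.+1 by exists mu.-1; lia.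
subst lam mu.
move: e2; rewrite !mulSn !mulnS !mulnDr !mulnDl; lia.
Qed.

From mathcomp Require Import all_classical all_reals all_analysis.
From mathcomp Require Import ring lra.
Import Order.TTheory GRing.Theory Num.Theory.
Local Open Scope ring_scope.


Lemma sq_lb (R : realType) (x lb lb' : R) :
  0 <= lb -> lb <= x -> lb' <= lb * lb -> lb' <= x ^+ 2.
Proof.
move=> h0 h1 h2; apply: (le_trans h2); rewrite expr2.
by apply: ler_pM.
Qed.

Arguments sq_lb {R x lb lb'}.

Lemma num_chk (R : realType) :
  ((33/32 : R) <= 1 + 1/32) /\ ((0:R) <= 33/32 /\ (10634/10000:R) <= 33/32*(33/32)) /\
  ((0:R) <= 10634/10000 /\ (11308/10000:R) <= 10634/10000*(10634/10000)) /\
  ((0:R) <= 11308/10000 /\ (12787/10000:R) <= 11308/10000*(11308/10000)) /\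
  ((0:R) <= 12787/10000 /\ (1635/1000:R) <= 12787/10000*(12787/10000)) /\
  ((0:R) <= 1635/1000 /\ (2673/1000:R) <= 1635/1000*(1635/1000)) /\
  ((0:R) <= 2673/1000 /\ (7:R) <= 2673/1000*(2673/1000)) /\
  ((2 : R) = 64%:R * (1/32)).
Proof.
split; first lra. split; first (split; lra). split; first (split; lra).
split; first (split; lra). split; first (split; lra). split; first (split; lra).
split; first (split; lra).
rewrite -[64%:R]/(64 : R); lra.
Qed.

Lemma e2_ge7 (R : realType) : 7 <= expR (2 : R).
Proof.
have [c0 [[c1 c1'] [[c2 c2'] [[c3 c3'] [[c4 c4'] [[c5 c5'] [[c6 c6'] c7]]]]]]] := num_chk R.
rewrite c7 expRM_natl.
set a := expR (1/32 : R). have h : 1 + 1/32 <= a := expR_ge1Dx _.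
have e : a ^+ 64 = (((((a ^+ 2) ^+ 2) ^+ 2) ^+ 2) ^+ 2) ^+ 2 by rewrite -!exprM.
rewrite e.
have h1 := sq_lb c1 (le_trans c0 h) c1'.
have h2 := sq_lb c2 h1 c2'.
have h3 := sq_lb c3 h2 c3'.
have h4 := sq_lb c4 h3 c4'.
have h5 := sq_lb c5 h4 c5'.
exact: sq_lb c6 h5 c6'.
Qed.

Lemma poly_le_exp (R : realType) (q : nat) : (2 <= q)%N ->
  ((q * q + q + 1)%:R : R) <= expR (q%:R).
Proof.
elim: q => [//|q IH].
rewrite leq_eqVlt => /orP [/eqP <-| hq].
  apply: le_trans (e2_ge7 R); rewrite -[7]/(7%:R : R) ler_nat //.
have {}IH := IH hq.
rewrite (_ : (q.+1)%:R = q%:R + 1 :> R); last by rewrite -addn1 natrD.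
rewrite expRD.
have e1 : 2 <= expR (1 : R) by have := expR_ge1Dx (1 : R); lra.
apply: (le_trans _ (ler_pM _ _ IH e1)); last 2 first.
- by rewrite ler0n.
- lra.
rewrite -natrM ler_nat; nia.
Qed.

Lemma ln_le_q (R : realType) (v q : nat) : (2 <= q)%N -> (1 <= v)%N ->
  (v <= q * q + q + 1)%N -> ln (v%:R : R) <= q%:R.
Proof.
move=> hq hv hvq.
rewrite -[X in _ <= X](expRK (q%:R : R)).
rewrite ler_ln ?posrE ?expR_gt0 ?ltr0n //.
apply: le_trans; last exact: (@poly_le_exp R q hq). by rewrite ler_nat.
Qed.

Lemma key (R : realType) (v q c : nat) : (0 < v)%N -> (0 < q)%N -> (2 * q <= v)%N ->
  ((v%:R : R) * ln v%:R / q%:R <= c%:R) -> (v * v * (v - 2 * q) ^ c <= v ^ c)%N.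
Proof.
move=> hv hq h2q hc.
rewrite -(ler_nat R) !natrM !natrX natrB // natrM.
set V := (v%:R : R). set Q := (q%:R : R).
have V0 : 0 < V by rewrite ltr0n.
have Q0 : 0 < Q by rewrite ltr0n.
have hle : 2 * Q <= V by rewrite -[2 : R]/(2%:R) -natrM ler_nat.
set t := 2 * Q / V.
have eV : V - 2 * Q = V * (1 - t) by rewrite /t; field; rewrite gt_eqF.
rewrite eV exprMn.
have t0 : 0 <= 1 - t by rewrite subr_ge0 /t ler_pdivrMr // mul1r.
have hexp : (1 - t) ^+ c <= expR (- t) ^+ c.
  apply: lerXn2r; rewrite ?nnegrE ?expR_ge0 //.
  by have := expR_ge1Dx (- t); rewrite addrC.
rewrite -expRM_natl in hexp.
have hct : - (c%:R * t) <= - (2 * ln V).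
  rewrite lerN2.
  have hh : V * ln V <= c%:R * Q by move: hc; rewrite ler_pdivrMr.
  have -> : c%:R * t = 2 * (c%:R * Q / V) by rewrite /t; field; rewrite gt_eqF.
  by rewrite ler_pM2l // ler_pdivlMr // mulrC.
have h3 : expR (- (c%:R * t)) <= expR (- (2 * ln V)) by rewrite ler_expR.
have e3 : expR (- (2 * ln V)) = (V * V)^-1.
  by rewrite expRN -[2]/(2%:R : R) expRM_natl lnK ?posrE // expr2.
have hh : (1 - t) ^+ c <= (V * V)^-1.
  by apply: (le_trans hexp); rewrite -e3 mulrN.
have VV : 0 < V * V by rewrite mulr_gt0.
rewrite mulrA (mulrC (V * V)) -mulrA.
rewrite -[X in _ <= X]mulr1; apply: ler_wpM2l; first by rewrite exprn_ge0 // ltW.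
apply: (le_trans (ler_wpM2l (ltW VV) hh)).
by rewrite mulfV ?gt_eqF.
Qed.

Theorem corollary2p6 (R : realType) (X : finType) (B : {set {set X}})
    (v k lam : nat) :
  symmetric_design B v k lam -> (2 <= k - lam)%N ->
  exists (SX : {set X}) (SY : {set {set X}}),
    split_resolving B SX SY /\
    ((#|SX| + #|SY|)%N)%:Z =
      2 * Num.ceil ((v%:R : R) * ln (v%:R : R) / ((k - lam)%N)%:R).
Proof.
move=> D hq.
have D' := D.
case: D' => hv hb hk hl hi.
case: (posnP v) => [v0 | vpos].
  exists (@finset.set0 X), (@finset.set0 _ : {set {set X}}); split.
    split; first by apply/fintype.subsetP => ?; rewrite inE.
    - move=> x1 x2 _; exfalso.
      have := card0_eq (etrans hv v0) x1; by rewrite !inE.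
    - move=> Y1 Y2 Y1B; exfalso; move: Y1B.
      by rewrite (cards0_eq (etrans hb v0)) inE.
  by rewrite v0 !cards0 mul0r mul0r ceil0.
set q := (k - lam)%N in hq *.
have hk2 : (2 <= k)%N by lia.
have [Y0 Y0B] : exists Y0, Y0 \in B by apply/card_gt0P; rewrite hb.
have kv : (k <= v)%N by rewrite -(hk Y0 Y0B) -hv; exact: max_card.
have v2 : (2 <= v)%N by lia.
have [Y1 [Y2 [Y1B Y2B Y12]]] : exists Y1 Y2, [/\ Y1 \in B, Y2 \in B & Y1 != Y2].
  by apply/card_gt1P; rewrite hb.
have h2k : (2 * k <= v + lam)%N.
  have := max_card (Y1 :|: Y2); rewrite cardsU (hk Y1 Y1B) (hk Y2 Y2B) (hi Y1 Y2 Y1B Y2B Y12) hv.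
  have : (lam <= k)%N by rewrite -(hk Y1 Y1B) -(hi Y1 Y2 Y1B Y2B Y12); apply: subset_leq_card; exact: subsetIl.
  lia.
have hkk := kk_eq X B v k lam D hk2 vpos.
have vq : (v <= q * q + q + 1)%N by apply: (arith v k lam) => //; lia.
have lnq : ln (v%:R : R) <= q%:R by apply: (ln_le_q R v q) => //.
set val := (v%:R : R) * ln (v%:R : R) / q%:R.
have q0 : (0 : R) < q%:R by rewrite ltr0n; lia.
have val0 : 0 <= val.
  by rewrite /val divr_ge0 ?ler0n // mulr_ge0 ?ler0n // ln_ge0 // ler1n.
have [c hc] : exists c : nat, Num.ceil val = c%:Z.
  exists `|Num.ceil val|%N; rewrite abszE ger0_norm // ceil_ge0; lra.
have cv : (c <= v)%N.
  have : Num.ceil val <= v%:Z.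
    rewrite ceil_le_int /val ler_pdivrMr //.
    apply: ler_wpM2l; [exact: ler0n | exact: lnq].
  by rewrite hc lez_nat.
have valc : val <= c%:R by have := ceil_ge val; rewrite hc.
have h2q : (2 * q <= v)%N by lia.
have q0n : (0 < q)%N by lia.
have hkey := key R v q c vpos q0n h2q valc.
pose PB := [set p in finset.setX B B | p.1 != p.2].
pose DB := fun p : {set X} * {set X} => (p.1 :\: p.2) :|: (p.2 :\: p.1).
have hB1 : forall p, p \in PB -> (2 * q <= #|DB p|)%N /\ DB p \subset [set: X].
  move=> [Z1 Z2]; rewrite !inE /= => /andP [/andP [Z1B Z2B] Z12]; split; last exact: finset.subsetT.
  by rewrite /DB (card_symdiff _ _ _ _ _ (hk Z1 Z1B) (hk Z2 Z2B) (hi Z1 Z2 Z1B Z2B Z12)).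
have hB2 : (0 < #|[set: X]|)%N by rewrite cardsT hv.
have hB3 : (#|PB| < #|[set: X]| * #|[set: X]|)%N.
  rewrite cardsT hv -hb -cardsX; apply: proper_card; apply/fintype.properP; split.
    by apply/fintype.subsetP => p; rewrite inE => /andP [].
  by exists (Y0, Y0); rewrite !inE ?Y0B ?eqxx.
have hB4 : (#|[set: X]| * #|[set: X]| * (#|[set: X]| - 2 * q) ^ c <= #|[set: X]| ^ c)%N.
  by rewrite cardsT hv.
have [SX0 [_ SX0c SX0h]] := hit X _ [set: X] PB DB (2 * q) c hB1 hB2 hB3 hB4.
have cX : (c <= #|[set: X]|)%N by rewrite cardsT hv.
have [SX [SXS _ SXc]] := pad X [set: X] SX0 c (finset.subsetT _) SX0c cX.
pose A := fun x : X => [set Y in B | x \in Y].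
pose PX := [set p : X * X | p.1 != p.2].
pose DX := fun p : X * X => (A p.1 :\: A p.2) :|: (A p.2 :\: A p.1).
have hX1 : forall p, p \in PX -> (2 * q <= #|DX p|)%N /\ DX p \subset B.
  move=> [x1 x2]; rewrite !inE /= => x12; split.
    have hI : #|A x1 :&: A x2| = lam.
      rewrite -(hl x1 x2 x12); apply: eq_card => Y; rewrite !inE.
      by case: (Y \in B); case: (x1 \in Y); case: (x2 \in Y).
    by rewrite /DX (card_symdiff _ _ _ k lam (rep_k X B v k lam x1 D hk2 vpos) (rep_k X B v k lam x2 D hk2 vpos) hI).
  apply/fintype.subsetP => Y; rewrite !inE.
  by case: (Y \in B); rewrite ?andbF ?andFb.
have hX2 : (0 < #|B|)%N by rewrite hb.
have hX3 : (#|PX| < #|B| * #|B|)%N.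
  rewrite hb -hv -card_prod -cardsT; apply: proper_card; apply/fintype.properP; split.
    exact: finset.subsetT.
  by have /card_gt0P [x _] := hB2; exists (x, x); rewrite !inE ?eqxx.
have hX4 : (#|B| * #|B| * (#|B| - 2 * q) ^ c <= #|B| ^ c)%N.
  by rewrite hb.
have [SY0 [SY0B SY0c SY0h]] := hit _ _ B PX DX (2 * q) c hX1 hX2 hX3 hX4.
have cB : (c <= #|B|)%N by rewrite hb.
have [SY [SYS SYB SYc]] := pad _ B SY0 c SY0B SY0c cB.
have hX0 : (0 < #|X|)%N by rewrite hv.
exists SX, SY; split; last by rewrite SXc SYc hc; lia.
split => //.
- move=> x1 x2 x12.
  have [Y YS YD] := SY0h (x1, x2) ltac:(by rewrite inE).
  exists Y; first exact: (fintype.subsetP SYS).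
  have [d1 _] := dist1 X B x1 Y hX0; have [d2 _] := dist1 X B x2 Y hX0.
  apply/eqP => e; move: YD; rewrite /DX !inE /=.
  move: d1 d2; rewrite e => -> ->.
  by case: (Y \in B); case: (x1 \in Y); case: (x2 \in Y).
- move=> Z1 Z2 Z1B Z2B Z12.
  have [x xS xD] := SX0h (Z1, Z2) ltac:(by rewrite !inE Z1B Z2B Z12).
  exists x; first exact: (fintype.subsetP SXS).
  have [_ d1] := dist1 X B x Z1 hX0; have [_ d2] := dist1 X B x Z2 hX0.
  apply/eqP => e.
  have E : (x \in Z1) = (x \in Z2) by move: d1 d2; rewrite e Z1B Z2B /= => <- <-.
  move: xD; rewrite /DB !inE /= E; by case: (x \in Z2).
Qed.
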